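(* If $G$ is a finite nonabelian group, then $K(G)\le G'$.
   Context: For $\chi\in\mathrm{Irr}(G)$, the center of $\chi$ is $Z(\chi)=\{g\in G : |\chi(g)|=\chi(1)\}$. For a nonabelian group $G$, let $\mathcal{X}=\{\chi\in\mathrm{Irr}(G) : Z(\chi)>Z(G)\}$ (strict containment) and define $K(G)=\bigcap_{\chi\in\mathcal{X}}\ker(\chi)$. *)

(* Defs.v *)
From mathcomp Require Import all_boot all_order all_algebra all_fingroup all_solvable all_field all_character.
Set Implicit Arguments. Unset Strict Implicit. Unset Printing Implicit Defensive.
Import GroupScope GRing.Theory Num.Theory.
Local Open Scope ring_scope.

Definition char_center (gT : finGroupType) (G : {group gT}) (chi : 'CF(G)) : {set gT} :=
  [set g in G | `|chi g| == chi 1%g].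

Definition KG (gT : finGroupType) (G : {group gT}) : {set gT} :=
  G :&: \bigcap_(i : Iirr G | 'Z(G) \proper char_center 'chi_i) cfker 'chi[G]_i.

(* Main.v *)
Require Import Defs.
From mathcomp Require Import all_boot all_order all_algebra all_fingroup all_solvable all_field all_character.
Import GroupScope GRing.Theory Num.Theory.

Theorem lemma2p1 (gT : finGroupType) (G : {group gT}) :
  ~~ abelian G -> KG G \subset (G^`(1))%g.
Proof.
move=> nabG; rewrite -cap_cfker_lin_irr.
apply/bigcapsP => i lin_i; apply/subsetP => x.
rewrite /KG inE => /andP[_ /bigcapP Hx]; apply: Hx.
have -> : char_center ('chi[G]_i)%R = G.
  apply/setP => g; rewrite /char_center inE.
  case Gg: (g \in G) => //=.
  by rewrite (normC_lin_char lin_i Gg) (lin_char1 lin_i) eqxx.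
rewrite properEneq center_sub andbT.
by apply: contra nabG => /eqP /center_idP.
Qed.
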